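(* Let $n\ge2$ and let $X$ be a simple directed graph with vertex set $[n]$. Let $p,q\in[n]$ satisfy: - $p\to q\in E(X)$; - $q\to p\notin E(X)$; - $\{p,q\}$ is sink-equivalent in $X$. Then $$\mathrm{ODP}(X,\mathrm{Cycle}_n)_{p\to q}=\frac{n\,x}{n-1}\,\mathrm{ODP}(X-q,\mathrm{Cycle}_{n-1}),$$ where $X-q$ is the induced subgraph of $X$ on $[n]\setminus\{q\}$.
   Context: For $n\ge2$, $\mathrm{Cycle}_n$ is the directed multigraph on $[n]$ with edges $i\to i+1$ ($1\le i\le n-1$) and $n\to1$; for $n=2$ its edges are $1\to2$ and $2\to1$. $\mathrm{Cycle}_1$ is a single vertex with no edges. For a simple directed graph $X$, a set $S\subseteq V(X)$ is sink-equivalent if for every $t\notin S$, either $s\to t\in E(X)$ for all $s\in S$, or $s\to t\notin E(X)$ for all $s\in S$. For directed graphs $X,Y$ with $|V(X)|=|V(Y)|$, $\mathrm{DFS}(X,Y)$ has as vertices the bijections $\sigma:V(X)\to V(Y)$. For each $\sigma$ and ordered pair $(a,b)$ of distinct vertices, it has $m_X(a,b)m_Y(\sigma(a),\sigma(b))$ edges from $\sigma$ to $\sigma\circ(a\,b)$, where $m_X(a,b)$ is the number of edges $a\to b$ in $X$. Thus $\mathrm{outdeg}(\sigma)=\sum_{a\ne b}m_X(a,b)m_Y(\sigma(a),\sigma(b))$ and $\mathrm{ODP}(X,Y)=\sum_\sigma x^{\mathrm{outdeg}(\sigma)}$. $\mathrm{ODP}(X,Y)_{a\to b}$ is the sum of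 $x^{\mathrm{outdeg}(\sigma)}$ over bijections $\sigma$ with $m_Y(\sigma(a),\sigma(b))\ge1$. *)

(* Defs.v *)
From HB Require Import structures.
From mathcomp Require Import all_boot all_order all_algebra all_fingroup.
Set Implicit Arguments. Unset Strict Implicit. Unset Printing Implicit Defensive.
Import GRing.Theory.
Local Open Scope ring_scope.

(* Vertices [n] = {1,...,n} are represented by 'I_n = {0,...,n-1} (vertex i+1 <-> i). *)

Definition simple_digraph (n : nat) (X : rel 'I_n) : Prop := irreflexive X.

Definition mult_simple (n : nat) (X : rel 'I_n) (a b : 'I_n) : nat := nat_of_bool (X a b).

Definition cycle_edges (n : nat) : seq (nat * nat) :=
  if (2 <= n)%N then [seq (i, i.+1) | i <- iota 0 n.-1] ++ [:: (n.-1, 0%N)] else [::].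

Definition mult_cycle (n : nat) (a b : 'I_n) : nat :=
  count (pred1 (val a, val b)) (cycle_edges n).

Definition outdeg (n : nat) (mX mY : 'I_n -> 'I_n -> nat) (s : {perm 'I_n}) : nat :=
  (\sum_(a : 'I_n) \sum_(b : 'I_n | a != b) mX a b * mY (s a) (s b))%N.

Definition ODP (n : nat) (mX mY : 'I_n -> 'I_n -> nat) : {poly rat} :=
  \sum_(s : {perm 'I_n}) 'X^(outdeg mX mY s).

Definition ODP_edge (n : nat) (mX mY : 'I_n -> 'I_n -> nat) (a b : 'I_n) : {poly rat} :=
  \sum_(s : {perm 'I_n} | (0 < mY (s a) (s b))%N) 'X^(outdeg mX mY s).

Definition sink_equivalent (n : nat) (X : rel 'I_n) (S : {set 'I_n}) : Prop :=
  forall t, t \notin S ->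
    (forall s, s \in S -> X s t) \/ (forall s, s \in S -> ~~ X s t).

(* Induced subgraph X - q on [n] \ {q}, relabelled onto 'I_(n-1) via the
   order-preserving bijection lift q : 'I_(n.-1) -> [n] \ {q}. *)
Definition delete_vertex (n : nat) (X : rel 'I_n) (q : 'I_n) : rel 'I_(n.-1) :=
  fun a b => X (lift q a) (lift q b).

(* Main.v *)
Require Import Defs.
From HB Require Import structures.
From mathcomp Require Import all_boot all_order all_algebra all_fingroup.
From mathcomp Require Import zify.
Import GRing.Theory.
Local Open Scope ring_scope.
Set Implicit Arguments. Unset Strict Implicit. Unset Printing Implicit Defensive.

Lemma val_addZp1 k (a : 'I_k.+1) : val (a + Zp1) = ((val a).+1 %% k.+1)%N.
Proof. by rewrite /= modnDmr addn1. Qed.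

Lemma count_cyc l x y : (x < l.+2)%N -> (y < l.+2)%N -> x != y ->
  count_mem (x, y) ([seq (i, i.+1) | i <- iota 0 l.+1] ++ [:: (l.+1, 0%N)])
  = nat_of_bool (y == x.+1 %% l.+2)%N.
Proof.
move=> Hx Hy nxy; rewrite count_cat count_map.
have -> : count (preim (fun i => (i, i.+1)) (pred1 (x, y))) (iota 0 l.+1)
   = ((x.+1 == y) * count_mem x (iota 0 l.+1))%N.
  case: eqP => [eab|neab].
    rewrite mul1n; apply: eq_count => i /=.
    by rewrite xpair_eqE -eab eqSS andbb.
  rewrite mul0n; apply/eqP; rewrite eqn0Ngt -has_count; apply/hasPn => i _ /=.
  rewrite xpair_eqE; case: eqP => //= ->; apply/eqP; exact: neab.
rewrite count_uniq_mem ?iota_uniq // mem_iota /= add0n.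
case: (ltnP x l.+1) => [altl|age].
  rewrite modn_small ?ltnS // muln1 /= xpair_eqE (gtn_eqF altl) addn0.
  by rewrite /= addn0 eq_sym.
have aeq : x = l.+1 by lia.
rewrite muln0 add0n xpair_eqE /= aeq eqxx modnn /= eq_sym.
by case: (_ == _).
Qed.

Lemma mult_cycleE k (a b : 'I_k.+1) : a != b ->
  mult_cycle a b = nat_of_bool (b == a + Zp1).
Proof.
case: k a b => [|l] a b; first by rewrite !ord1.
move=> nab; rewrite /mult_cycle /cycle_edges.
change (count_mem (val a, val b) ([seq (i, i.+1) | i <- iota 0 l.+1] ++ [:: (l.+1, 0%N)]) = (b == a + Zp1)).
rewrite -val_eqE val_addZp1; by apply: count_cyc; rewrite ?ltn_ord.
Qed.
Definition wC k (mX : 'I_k.+1 -> 'I_k.+1 -> nat) (s : {perm 'I_k.+1}) : nat :=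
  (\sum_(a : 'I_k.+1) \sum_(b : 'I_k.+1) mX a b * nat_of_bool (s b == (s a + Zp1)%R))%N.

Definition shiftp k (c : 'I_k.+1) : {perm 'I_k.+1} := perm (addIr c).

Lemma shiftpE k (c x : 'I_k.+1) : shiftp c x = x + c.
Proof. by rewrite permE. Qed.

Lemma wC_shift k mX (s : {perm 'I_k.+1}) c : wC mX (s * shiftp c)%g = wC mX s.
Proof.
apply: eq_bigr => a _; apply: eq_bigr => b _.
by rewrite !permM !shiftpE addrAC (inj_eq (addIr c)).
Qed.

Lemma shiftp_inv k (c : 'I_k.+1) : (shiftp c * shiftp (- c) = 1)%g.
Proof. by apply/permP => x; rewrite permM !shiftpE perm1 addrK. Qed.

Lemma sum_shift k (F : {perm 'I_k.+1} -> {poly rat}) (Q : pred {perm 'I_k.+1}) c :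
  (forall s, F (s * shiftp c)%g = F s) ->
  \sum_(s | Q s) F s = \sum_(s | Q (s * shiftp c)%g) F s.
Proof.
move=> HF; rewrite (reindex (fun s => s * shiftp c)%g).
  by apply: eq_bigr => s _; rewrite HF.
exists (fun s => s * shiftp (- c))%g => s _.
  by rewrite -mulgA shiftp_inv mulg1.
by rewrite -mulgA -{2}(opprK c) shiftp_inv mulg1.
Qed.

Lemma shift_eq k (x c j : 'I_k.+1) : (x + c == j) = (x == j - c).
Proof. exact: (can2_eq (addrK c) (subrK c)). Qed.

Lemma outdegE k (mX : 'I_k.+1 -> 'I_k.+1 -> nat) s :
  (forall a, mX a a = 0%N) -> outdeg mX (@mult_cycle k.+1) s = wC mX s.
Proof.
move=> H0; apply: eq_bigr => a _.
rewrite [RHS](bigD1 a) //= H0 mul0n add0n.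
apply: eq_big => [b|b nab]; first by rewrite eq_sym.
by rewrite mult_cycleE // (inj_eq perm_inj).
Qed.

Lemma sum_fix_p k mX (p j j0 : 'I_k.+1) :
  \sum_(s : {perm 'I_k.+1} | s p == j) 'X^(wC mX s) =
  \sum_(s : {perm 'I_k.+1} | s p == j0) 'X^(wC mX s) :> {poly rat}.
Proof.
rewrite [RHS](sum_shift _ (c := j0 - j)); last by move=> s; rewrite wC_shift.
apply: eq_bigl => s; rewrite permM shiftpE shift_eq.
by rewrite opprB addrC subrK.
Qed.

Lemma ODP_fix k mX (p : 'I_k.+1) : (forall a, mX a a = 0%N) ->
  ODP mX (@mult_cycle k.+1) =
  (\sum_(s : {perm 'I_k.+1} | s p == ord_max) 'X^(wC mX s)) *+ k.+1.
Proof.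
move=> H0; rewrite /ODP (partition_big (fun s : {perm _} => s p) xpredT) //=.
rewrite -[X in _ = _ *+ X](card_ord k.+1) -sumr_const; apply: eq_bigr => j _.
by rewrite -(sum_fix_p mX p j); apply: eq_bigr => s _; rewrite outdegE.
Qed.

Lemma ord_max_eq m : (ord_max : 'I_m.+2) = inord m + Zp1.
Proof. apply: val_inj; rewrite val_addZp1 /= inordK // modn_small //. Qed.

Lemma ODPedge_fix m mX (p q : 'I_m.+2) : p != q -> (forall a, mX a a = 0%N) ->
  ODP_edge mX (@mult_cycle m.+2) p q =
  (\sum_(s : {perm 'I_m.+2} | (s q == ord_max) && (s p == inord m)) 'X^(wC mX s)) *+ m.+2.
Proof.
move=> npq H0; rewrite /ODP_edge.
rewrite (eq_big (fun s : {perm 'I_m.+2} => s q == s p + Zp1) (fun s => 'X^(wC mX s))); last first.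
- by move=> s _; rewrite outdegE.
- by move=> s; rewrite mult_cycleE ?(inj_eq perm_inj) //; case: (_ == _).
rewrite (partition_big (fun s : {perm _} => s p) xpredT) //=.
rewrite -[X in _ = _ *+ X](card_ord m.+2) -sumr_const; apply: eq_bigr => j _.
rewrite [RHS](sum_shift _ (c := inord m - j)); last by move=> s; rewrite wC_shift.
apply: eq_bigl => s; rewrite !permM !shiftpE !shift_eq.
rewrite subKr ord_max_eq opprB addrAC [inord m + _]addrC subrK.
by case: (s p =P j) => [->|_]; rewrite ?andbT ?andbF.
Qed.

Lemma val_lift_max m (y : 'I_m.+1) : val (lift (ord_max : 'I_m.+2) y) = val y.
Proof. exact: lift_max. Qed.

Lemma f2 m (y : 'I_m.+1) : (lift (ord_max : 'I_m.+2) y == (ord_max : 'I_m.+2) + Zp1) = (y == ord0).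
Proof. by rewrite -!val_eqE val_addZp1 val_lift_max /= modnn. Qed.

Lemma f3 m (x : 'I_m.+1) : ((ord_max : 'I_m.+2) == lift ord_max x + Zp1) = (x == ord_max).
Proof.
rewrite -!val_eqE val_addZp1 val_lift_max /= modn_small ?ltnS ?ltn_ord //.
by rewrite eqSS eq_sym. exact: (ltn_ord x).
Qed.

Lemma f4 m (x y : 'I_m.+1) :
  (nat_of_bool (lift (ord_max : 'I_m.+2) y == (lift ord_max x + Zp1)%R) +
   nat_of_bool ((x == ord_max) && (y == ord0)))%N = nat_of_bool (y == x + Zp1).
Proof.
rewrite -!val_eqE !val_addZp1 !val_lift_max /=.
case: x y => x Hx [y Hy] /=.
case: (ltnP x m) => [xlt|xge].
  rewrite !modn_small ?ltnS //.
  by rewrite (ltn_eqF xlt) /= addn0.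
have -> : x = m by lia.
rewrite eqxx modnn modn_small // (ltn_eqF Hy) /=.
by case: (y == 0)%N.
Qed.

Lemma sum_lift_perm n (i0 j0 : 'I_n.+1) (F : {perm 'I_n.+1} -> {poly rat}) :
  \sum_(s : {perm 'I_n.+1} | s i0 == j0) F s =
  \sum_(t : {perm 'I_n}) F (lift_perm i0 j0 t).
Proof.
rewrite (reindex (lift_perm i0 j0)); last first.
  pose ulsf i (s : 'S_n.+1) k := odflt k (unlift (s i) (s (lift i k))).
  have ulsfK i (s : 'S_n.+1) k: lift (s i) (ulsf i s k) = s (lift i k).
    rewrite /ulsf; have:= neq_lift i k.
    by rewrite -(can_eq (permK s)) => /unlift_some[] ? ? ->.
  have inj_ulsf: injective (ulsf i0 _).
    move=> s; apply: can_inj (ulsf (s i0) s^-1%g) _ => k'.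
    by rewrite {1}/ulsf ulsfK !permK liftK.
  exists (fun s => perm (inj_ulsf s)) => [s _ | s].
    by apply/permP=> k'; rewrite permE /ulsf lift_perm_lift lift_perm_id liftK.
  move/(s _ =P _) => si0; apply/permP=> k.
  case: (unliftP i0 k) => [k'|] ->; rewrite ?lift_perm_id //.
  by rewrite lift_perm_lift -si0 permE ulsfK.
by apply: eq_bigl => t; rewrite lift_perm_id eqxx.
Qed.

Lemma wC_lift m (X : rel 'I_m.+2) (q : 'I_m.+2) (p' : 'I_m.+1) (t : {perm 'I_m.+1}) :
  irreflexive X -> X (lift q p') q -> ~~ X q (lift q p') ->
  (forall b, b != p' -> X (lift q p') (lift q b) = X q (lift q b)) ->
  t p' = ord_max ->
  wC (mult_simple X) (lift_perm q ord_max t) =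
  (wC (k := m) (mult_simple (delete_vertex X q)) t).+1.
Proof.
move=> Hirr Hpq Hqp Hsink Htp.
set s := lift_perm q ord_max t.
pose Sq := (\sum_(b < m.+1) X q (lift q b) * nat_of_bool (t b == ord0))%N.
pose Sp := (\sum_(b < m.+1) X (lift q p') (lift q b) * nat_of_bool (t b == ord0))%N.
pose T := (\sum_(a < m.+1) \sum_(b < m.+1) X (lift q a) (lift q b) *
   nat_of_bool (lift (ord_max : 'I_m.+2) (t b) == (lift ord_max (t a) + Zp1)%R))%N.
have E1 : (\sum_(b < m.+2) mult_simple X q b * nat_of_bool (s b == (s q + Zp1)%R))%N = Sq.
  rewrite (bigD1_ord q) //= /mult_simple Hirr mul0n add0n.
  by apply: eq_bigr => b _; rewrite lift_perm_id lift_perm_lift f2.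
have E2 : forall a, (\sum_(b < m.+2) mult_simple X (lift q a) b *
     nat_of_bool (s b == (s (lift q a) + Zp1)%R))%N =
   (X (lift q a) q * nat_of_bool (t a == ord_max) +
    \sum_(b < m.+1) X (lift q a) (lift q b) *
     nat_of_bool (lift (ord_max : 'I_m.+2) (t b) == (lift ord_max (t a) + Zp1)%R))%N.
  move=> a; rewrite (bigD1_ord q) //= lift_perm_id lift_perm_lift f3.
  by congr (_ + _)%N; apply: eq_bigr => b _; rewrite lift_perm_lift.
have E3 : (\sum_(a < m.+1) X (lift q a) q * nat_of_bool (t a == ord_max))%N = 1%N.
  rewrite (bigD1 p') //= Htp eqxx Hpq big1 // => a na.
  by rewrite -Htp (inj_eq perm_inj) (negbTE na) muln0.
have E4 : wC (k := m) (mult_simple (delete_vertex X q)) t = (T + Sp)%N.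
  rewrite /wC.
  transitivity (\sum_(a < m.+1) \sum_(b < m.+1) (X (lift q a) (lift q b) *
     nat_of_bool (lift (ord_max : 'I_m.+2) (t b) == (lift ord_max (t a) + Zp1)%R) +
     X (lift q a) (lift q b) * nat_of_bool ((t a == ord_max) && (t b == ord0))))%N.
    by apply: eq_bigr => a _; apply: eq_bigr => b _; rewrite -mulnDr f4.
  under eq_bigr do rewrite big_split /=.
  rewrite big_split /=; congr (_ + _)%N.
  rewrite (bigD1 p') //= [X in (_ + X)%N]big1 ?addn0; last first.
    move=> a na; apply: big1 => b _.
    by rewrite -Htp (inj_eq perm_inj) (negbTE na) /= muln0.
  by apply: eq_bigr => b _; rewrite Htp eqxx.
have E5 : Sq = Sp.
  apply: eq_bigr => b _; case: (b =P p') => [->|nb].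
    by rewrite (negbTE Hqp) Hirr.
  by rewrite Hsink //; apply/eqP.
rewrite E4 /wC (bigD1_ord q) //= E1 (eq_bigr _ (fun a _ => E2 a)) big_split /= E3 E5.
by rewrite -/T add1n addnS addnC.
Qed.

Theorem mainTheorem15 (n : nat) (X : rel 'I_n) (p q : 'I_n) :
  (2 <= n)%N ->
  simple_digraph X ->
  X p q ->
  ~~ X q p ->
  sink_equivalent X [set p; q] ->
  ODP_edge (mult_simple X) (@mult_cycle n) p q =
    ((n%:R / (n.-1)%:R : rat) *: ('X * ODP (mult_simple (delete_vertex X q)) (@mult_cycle n.-1))).
Proof.
case: n X p q => [|[|m]] X p q // _ Hirr Hpq Hqp Hsink.
have npq : p != q by apply/eqP => Epq; move: Hpq; rewrite Epq Hirr.
case: (unliftP q p) => [p' Ep|Ep]; last by rewrite Ep eqxx in npq.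
have H0 : forall a, mult_simple X a a = 0%N by move=> a; rewrite /mult_simple Hirr.
have H0' : forall a, mult_simple (delete_vertex X q) a a = 0%N.
  by move=> a; rewrite /mult_simple /delete_vertex Hirr.
have HS : forall b, b != p' -> X (lift q p') (lift q b) = X q (lift q b).
  move=> b nb; rewrite -Ep.
  have : lift q b \notin [set p; q].
    rewrite !inE negb_or [lift q b == q]eq_sym neq_lift andbT Ep (inj_eq (@lift_inj _ q)).
    exact: nb.
  case/Hsink => H.
    by rewrite !H // !inE eqxx ?orbT.
  by rewrite (negbTE (H p _)) ?(negbTE (H q _)) // !inE eqxx ?orbT.
rewrite (ODPedge_fix npq H0).
change (ODP (mult_simple (delete_vertex X q)) (@mult_cycle m.+1)) with
  (ODP (n := m.+1) (mult_simple (delete_vertex X q)) (@mult_cycle m.+1)).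
rewrite (ODP_fix p' H0') big_mkcondr sum_lift_perm.
rewrite (eq_bigr (fun t : {perm 'I_m.+1} => if t p' == ord_max then
     'X * 'X^(wC (k := m) (mult_simple (delete_vertex X q)) t) else 0)); last first.
  move=> t _; rewrite Ep lift_perm_lift.
  have -> : (lift ord_max (t p') == inord m :> 'I_m.+2) = (t p' == ord_max).
    by rewrite -!val_eqE val_lift_max /= inordK.
  case: eqP => // Htp.
  rewrite (wC_lift (p' := p') Hirr) -?Ep //; first exact: exprS.
  by move=> b nb; rewrite Ep HS.
rewrite -big_mkcond /= -mulr_sumr.
set B := \sum_(_ | _) _.
change (m.+2.-1) with m.+1.
rewrite -scaler_nat -!mul_polyC -[B *+ _]mulr_natr -[_%:R : {poly rat}]polyC_natr.
rewrite [X in _ = _ * X]mulrA [X in _ = _ * X]mulrC mulrA.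
rewrite [RHS]mulrA -polyCM divfK ?mulrA //.
by rewrite Num.Theory.pnatr_eq0.
Qed.
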